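(* Let $\alpha\in(0,\pi)$ and let $G\subset S_\alpha$ be a domain such that for some $r>0$, \[ G\cap B^2(r)=S_\alpha\cap B^2(r). \] Then $A_G\ge A_{S_\alpha}$.
   Context: $S_\alpha=\{\rho e^{it}:\rho>0,\ t\in(0,\alpha)\}\subset\mathbb{R}^2=\mathbb{C}$, and $B^2(r)$ is the open disk of radius $r$ centered at the origin. For a domain $G\subsetneq\mathbb{R}^n$ let $d_G(x)=d(x,\partial G)$; $k_G(x,y)=\inf_\gamma\int_\gamma\frac{|dx|}{d_G(x)}$ over rectifiable curves $\gamma\subset G$ joining $x,y$ (quasihyperbolic distance); $j_G(x,y)=\log\left(1+\frac{|x-y|}{\min\{d_G(x),d_G(y)\}}\right)$; and $A_G=\inf\{A\ge1: k_G\le A\,j_G\text{ on }G\times G\}$ (with $\inf\emptyset=+\infty$). *)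

(* Defs.v *)
From Stdlib Require Import Reals Lra ClassicalEpsilon.
Open Scope R_scope.

(** Extended nonnegative values: [Some r] is a real, [None] is +infinity. *)
Definition ER := option R.

Definition er_le (a b : ER) : Prop :=
  match a, b with
  | _, None => True
  | None, Some _ => False
  | Some x, Some y => x <= y
  end.

(** Supremum of a set of reals: [Some] of the lub when the set is nonempty and
    bounded above, [None] (= +oo) otherwise (only used on nonempty sets). *)
Definition sup_opt (E : R -> Prop) : ER :=
  match excluded_middle_informative (bound E /\ exists x, E x) with
  | left H => Some (proj1_sig (completeness E (proj1 H) (proj2 H)))
  | right _ => None
  end.

(** Infimum of a set of reals: [None] (= +oo) for the empty set; the glb
    otherwise (only used on sets bounded below, so [None] never means -oo). *)
Definition inf_opt (E : R -> Prop) : ER :=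
  match sup_opt (fun x => E (- x)) with
  | Some m => Some (- m)
  | None => None
  end.

(** Real-valued infimum (default 0 when not attained as a real). *)
Definition Rinf (E : R -> Prop) : R :=
  match inf_opt E with Some r => r | None => 0 end.

Definition pt := (R * R)%type.
Definition pdist (p q : pt) : R :=
  sqrt ((fst p - fst q) ^ 2 + (snd p - snd q) ^ 2).
Definition origin : pt := (0, 0).

Definition is_open (G : pt -> Prop) : Prop :=
  forall z, G z -> exists eps, 0 < eps /\ forall w, pdist z w < eps -> G w.

Definition is_connected (G : pt -> Prop) : Prop :=
  ~ exists U V : pt -> Prop,
      is_open U /\ is_open V /\
      (forall z, G z -> U z \/ V z) /\
      (exists z, G z /\ U z) /\ (exists z, G z /\ V z) /\
      ~ (exists z, G z /\ U z /\ V z).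

Definition domain (G : pt -> Prop) : Prop :=
  (exists z, G z) /\ is_open G /\ is_connected G.

Definition sector (alpha : R) (z : pt) : Prop :=
  exists rho t, 0 < rho /\ 0 < t < alpha /\ z = (rho * cos t, rho * sin t).

Definition boundary (G : pt -> Prop) (z : pt) : Prop :=
  forall eps, 0 < eps ->
    (exists u, G u /\ pdist z u < eps) /\ (exists u, ~ G u /\ pdist z u < eps).

Definition dG (G : pt -> Prop) (x : pt) : R :=
  Rinf (fun d => exists z, boundary G z /\ d = pdist x z).

Definition curve_in (G : pt -> Prop) (gamma : R -> pt) (x y : pt) : Prop :=
  gamma 0 = x /\ gamma 1 = y /\
  (forall t, 0 <= t <= 1 -> G (gamma t)) /\
  (forall t, 0 <= t <= 1 -> forall eps, 0 < eps -> exists delta, 0 < delta /\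
     forall s, 0 <= s <= 1 -> Rabs (s - t) < delta -> pdist (gamma s) (gamma t) < eps).

Fixpoint rsum (f : nat -> R) (n : nat) : R :=
  match n with O => 0 | S k => rsum f k + f k end.

Definition partition (P : nat -> R) (n : nat) : Prop :=
  P O = 0 /\ P n = 1 /\ (forall i, (i < n)%nat -> P i <= P (S i)).

Definition chord_sum (gamma : R -> pt) (P : nat -> R) (n : nat) : R :=
  rsum (fun i => pdist (gamma (P i)) (gamma (P (S i)))) n.

Definition rectifiable (gamma : R -> pt) : Prop :=
  exists M, forall P n, partition P n -> chord_sum gamma P n <= M.

(** Line integral of a nonnegative continuous f w.r.t. arc length along gamma:
    supremum over partitions of  sum_i (inf_{[P i, P (i+1)]} f o gamma) * |gamma(P(i+1)) - gamma(P i)|. *)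
Definition lower_sum (f : pt -> R) (gamma : R -> pt) (P : nat -> R) (n : nat) : R :=
  rsum (fun i =>
          Rinf (fun v => exists t, P i <= t <= P (S i) /\ v = f (gamma t))
          * pdist (gamma (P i)) (gamma (P (S i)))) n.

Definition line_integral (f : pt -> R) (gamma : R -> pt) : ER :=
  sup_opt (fun v => exists P n, partition P n /\ v = lower_sum f gamma P n).

Definition k_G (G : pt -> Prop) (x y : pt) : ER :=
  inf_opt (fun v => exists gamma, curve_in G gamma x y /\ rectifiable gamma /\
             line_integral (fun z => / dG G z) gamma = Some v).

Definition j_G (G : pt -> Prop) (x y : pt) : R :=
  ln (1 + pdist x y / Rmin (dG G x) (dG G y)).

Definition A_G (G : pt -> Prop) : ER :=
  inf_opt (fun A => 1 <= A /\
     forall x y, G x -> G y -> er_le (k_G G x y) (Some (A * j_G G x y))).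

(* Main.v *)
Require Import Defs.
From Stdlib Require Import Reals Lra Lia Rgeom Classical ClassicalEpsilon FunctionalExtensionality PropExtensionality.
Open Scope R_scope.


Lemma sup_opt_some (E : R -> Prop) : bound E -> (exists x, E x) ->
  exists m, sup_opt E = Some m /\ is_lub E m.
Proof.
  intros Hb He. unfold sup_opt.
  destruct (excluded_middle_informative _) as [H|H].
  - destruct (completeness E _ _) as [m Hm]; simpl. eauto.
  - exfalso; tauto.
Qed.

Lemma sup_opt_inv (E : R -> Prop) m : sup_opt E = Some m ->
  is_lub E m /\ exists x, E x.
Proof.
  unfold sup_opt.
  destruct (excluded_middle_informative _) as [H|H]; [|discriminate].
  destruct (completeness E _ _) as [m' Hm]; simpl. intros Heq. injection Heq as <-. split; [exact Hm|exact (proj2 H)].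
Qed.

Lemma sup_opt_empty (E : R -> Prop) : ~ (exists x, E x) -> sup_opt E = None.
Proof.
  intros He. unfold sup_opt.
  destruct (excluded_middle_informative _) as [H|H]; [|reflexivity]. exfalso; apply He; exact (proj2 H).
Qed.

Lemma inf_opt_some (E : R -> Prop) : (exists x, E x) -> (exists b, forall x, E x -> b <= x) ->
  exists m, inf_opt E = Some m /\ (forall x, E x -> m <= x) /\
    (forall b, (forall x, E x -> b <= x) -> b <= m).
Proof.
  intros [x0 Hx0] [b Hb]. unfold inf_opt.
  destruct (sup_opt_some (fun x => E (- x))) as [m [Hm Hl]].
  - exists (- b). intros y Hy. apply Hb in Hy. unfold Rge. lra.
  - exists (- x0). rewrite Ropp_involutive. exact Hx0.
  - rewrite Hm. exists (- m). split; [reflexivity|]. destruct Hl as [Hu Hl]. split.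
    + intros x Hx. assert (- x <= m). { apply Hu. rewrite Ropp_involutive. exact Hx. } lra.
    + intros b' Hb'. assert (m <= - b'). { apply Hl. intros y Hy. apply Hb' in Hy. lra. } lra.
Qed.

Lemma inf_opt_inv (E : R -> Prop) m : inf_opt E = Some m ->
  (exists x, E x) /\ (forall x, E x -> m <= x) /\
    (forall b, (forall x, E x -> b <= x) -> b <= m).
Proof.
  unfold inf_opt. destruct (sup_opt (fun x => E (- x))) as [m'|] eqn:Hs; [|discriminate].
  intros [= <-]. apply sup_opt_inv in Hs. destruct Hs as [[Hu Hl] [x Hx]].
  split; [eauto|]. split.
  - intros y Hy. assert (- y <= m'). { apply Hu. rewrite Ropp_involutive. exact Hy. } lra.
  - intros b Hb. assert (m' <= - b). { apply Hl. intros y Hy. apply Hb in Hy. lra. } lra.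
Qed.

Lemma inf_opt_empty (E : R -> Prop) : ~ (exists x, E x) -> inf_opt E = None.
Proof.
  intros He. unfold inf_opt. rewrite sup_opt_empty; [reflexivity|].
  intros [x Hx]. apply He. eauto.
Qed.

Lemma inf_opt_le (E1 E2 : R -> Prop) b c :
  (forall x, E1 x -> b <= x) ->
  (forall v, E2 v -> exists w, E1 w /\ w <= v) ->
  inf_opt E2 = Some c -> exists c', inf_opt E1 = Some c' /\ c' <= c.
Proof.
  intros Hb Hc H2. apply inf_opt_inv in H2. destruct H2 as [[v Hv] [H2u H2l]].
  destruct (Hc v Hv) as [w [Hw _]].
  destruct (inf_opt_some E1) as [c' [H1 [H1u H1l]]]; eauto.
  exists c'. split; auto. apply H2l. intros x Hx. destruct (Hc x Hx) as [w' [Hw' Hle]].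
  specialize (H1u w' Hw'). lra.
Qed.

Lemma sup_opt_le (E1 E2 : R -> Prop) c :
  (exists x, E2 x) ->
  (forall v, E2 v -> exists w, E1 w /\ v <= w) ->
  sup_opt E1 = Some c -> exists c', sup_opt E2 = Some c' /\ c' <= c.
Proof.
  intros Hne Hc H1. apply sup_opt_inv in H1. destruct H1 as [[H1u H1l] _].
  destruct (sup_opt_some E2) as [c' [H2 [H2u H2l]]]; auto.
  - exists c. intros x Hx. destruct (Hc x Hx) as [w [Hw Hle]]. specialize (H1u w Hw). lra.
  - exists c'. split; auto. apply H2l. intros x Hx. destruct (Hc x Hx) as [w [Hw Hle]].
    specialize (H1u w Hw). lra.
Qed.

Lemma Rinf_glb (E : R -> Prop) : (exists x, E x) -> (exists b, forall x, E x -> b <= x) ->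
  (forall x, E x -> Rinf E <= x) /\ (forall b, (forall x, E x -> b <= x) -> b <= Rinf E).
Proof.
  intros He Hb. destruct (inf_opt_some E He Hb) as [m [Hm [Hu Hl]]].
  unfold Rinf. rewrite Hm. auto.
Qed.

Lemma Rinf_nonneg (E : R -> Prop) : (forall x, E x -> 0 <= x) -> 0 <= Rinf E.
Proof.
  intros H. destruct (classic (exists x, E x)) as [He|He].
  - apply (Rinf_glb E He (ex_intro _ 0 H)). exact H.
  - unfold Rinf. rewrite inf_opt_empty; auto. lra.
Qed.

Lemma Rinf_le (E1 E2 : R -> Prop) :
  (forall x, E1 x -> 0 <= x) -> (exists v, E2 v) ->
  (forall v, E2 v -> exists w, E1 w /\ w <= v) -> Rinf E1 <= Rinf E2.
Proof.
  intros H0 [v Hv] Hc.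
  destruct (inf_opt_some E2) as [c [Hc2 _]]; eauto.
  { exists 0. intros x Hx. destruct (Hc x Hx) as [w [Hw Hle]]. specialize (H0 w Hw). lra. }
  destruct (inf_opt_le E1 E2 0 c H0 Hc Hc2) as [c' [Hc1 Hle]].
  unfold Rinf. rewrite Hc1, Hc2. exact Hle.
Qed.

Lemma Rinf_scale (E : R -> Prop) c : 0 < c -> (forall x, E x -> 0 <= x) ->
  Rinf (fun v => exists u, E u /\ v = c * u) = c * Rinf E.
Proof.
  intros Hc H0. destruct (classic (exists x, E x)) as [He|He].
  - destruct (Rinf_glb E He (ex_intro _ 0 H0)) as [Hu Hl].
    destruct He as [x0 Hx0].
    destruct (Rinf_glb (fun v => exists u, E u /\ v = c * u)) as [Hu' Hl'].
    + exists (c * x0); eauto.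
    + exists 0. intros v [u [Hu1 ->]]. specialize (H0 u Hu1). nra.
    + apply Rle_antisym.
      * set (X := Rinf (fun v => exists u, E u /\ v = c * u)) in *.
        assert (/ c * X <= Rinf E).
        { apply Hl. intros x Hx.
          assert (X <= c * x) by (apply Hu'; eauto).
          assert (/ c * (c * x) = x) by (field; lra).
          assert (0 < / c) by (apply Rinv_0_lt_compat; lra). nra. }
        assert (c * (/ c * X) = X) by (field; lra). nra.
      * apply Hl'. intros v [u [Hu1 ->]]. apply Rmult_le_compat_l; [lra|]. auto.
  - unfold Rinf. rewrite !inf_opt_empty; auto. lra.
    intros [v [u [Hu _]]]. apply He; eauto.
Qed.

Definition sc (c : R) (p : pt) : pt := (c * fst p, c * snd p).
Definition seg (x z : pt) (s : R) : pt :=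
  (fst x + s * (fst z - fst x), snd x + s * (snd z - snd x)).

Lemma sqrt_scale k u v : sqrt ((k * u) ^ 2 + (k * v) ^ 2) = Rabs k * sqrt (u ^ 2 + v ^ 2).
Proof.
  replace ((k * u) ^ 2 + (k * v) ^ 2) with (Rsqr k * (u ^ 2 + v ^ 2)) by (unfold Rsqr; ring).
  rewrite sqrt_mult. rewrite sqrt_Rsqr_abs. reflexivity.
  apply Rle_0_sqr. nra.
Qed.

Lemma pdist_nonneg p q : 0 <= pdist p q.
Proof. unfold pdist. apply sqrt_pos. Qed.

Lemma pdist_sym p q : pdist p q = pdist q p.
Proof. unfold pdist. f_equal. ring. Qed.

Lemma pdist_refl p : pdist p p = 0.
Proof. unfold pdist. replace ((fst p - fst p) ^ 2 + (snd p - snd p) ^ 2) with 0 by ring. apply sqrt_0. Qed.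

Lemma pdist_sc c p q : 0 <= c -> pdist (sc c p) (sc c q) = c * pdist p q.
Proof.
  intros Hc. unfold pdist, sc; cbn [fst snd].
  replace (c * fst p - c * fst q) with (c * (fst p - fst q)) by ring.
  replace (c * snd p - c * snd q) with (c * (snd p - snd q)) by ring.
  rewrite sqrt_scale. rewrite Rabs_pos_eq; auto.
Qed.

Lemma pdist_tri p q w : pdist p q <= pdist p w + pdist w q.
Proof.
  destruct p as [a b], q as [c d], w as [e f].
  pose proof (triangle a b c d e f) as H. unfold dist_euc, Rsqr in H.
  unfold pdist; cbn [fst snd]. replace ((a - c) ^ 2) with ((a - c) * (a - c)) by ring.
  replace ((b - d) ^ 2) with ((b - d) * (b - d)) by ring.
  replace ((a - e) ^ 2) with ((a - e) * (a - e)) by ring.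
  replace ((b - f) ^ 2) with ((b - f) * (b - f)) by ring.
  replace ((e - c) ^ 2) with ((e - c) * (e - c)) by ring.
  replace ((f - d) ^ 2) with ((f - d) * (f - d)) by ring. exact H.
Qed.

Lemma fst_le p q : Rabs (fst p - fst q) <= pdist p q.
Proof.
  unfold pdist. rewrite <- sqrt_Rsqr_abs. apply sqrt_le_1_alt.
  unfold Rsqr. simpl. pose proof (Rle_0_sqr (snd p - snd q)) as Hs; pose proof (Rle_0_sqr (fst p - fst q)) as Hf; unfold Rsqr in *; lra.
Qed.

Lemma snd_le p q : Rabs (snd p - snd q) <= pdist p q.
Proof.
  unfold pdist. rewrite <- sqrt_Rsqr_abs. apply sqrt_le_1_alt.
  unfold Rsqr. simpl. pose proof (Rle_0_sqr (snd p - snd q)) as Hs; pose proof (Rle_0_sqr (fst p - fst q)) as Hf; unfold Rsqr in *; lra.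
Qed.

Lemma pdist_eq0 p q : pdist p q = 0 -> p = q.
Proof.
  intros H. pose proof (fst_le p q). pose proof (snd_le p q).
  rewrite H in *. pose proof (Rabs_pos (fst p - fst q)). pose proof (Rabs_pos (snd p - snd q)).
  assert (Rabs (fst p - fst q) = 0) by lra. assert (Rabs (snd p - snd q) = 0) by lra.
  assert (fst p = fst q). { destruct (Req_dec (fst p - fst q) 0) as [E|E]; [lra|]. apply Rabs_pos_lt in E. lra. }
  assert (snd p = snd q). { destruct (Req_dec (snd p - snd q) 0) as [E|E]; [lra|]. apply Rabs_pos_lt in E. lra. }
  destruct p, q; cbn [fst snd] in *. f_equal; lra.
Qed.

Lemma pdist_seg x z a b : pdist (seg x z a) (seg x z b) = Rabs (a - b) * pdist x z.
Proof.
  unfold pdist, seg; cbn [fst snd].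
  replace (fst x + a * (fst z - fst x) - (fst x + b * (fst z - fst x))) with ((b - a) * (fst x - fst z)) by ring.
  replace (snd x + a * (snd z - snd x) - (snd x + b * (snd z - snd x))) with ((b - a) * (snd x - snd z)) by ring.
  rewrite sqrt_scale, Rabs_minus_sym. reflexivity.
Qed.

Lemma seg0 x z : seg x z 0 = x.
Proof. unfold seg. destruct x; cbn [fst snd]. f_equal; ring. Qed.
Lemma seg1 x z : seg x z 1 = z.
Proof. unfold seg. destruct x, z; cbn [fst snd]. f_equal; ring. Qed.

Lemma sc_sc a b p : sc a (sc b p) = sc (a * b) p.
Proof. unfold sc; cbn [fst snd]. f_equal; ring. Qed.
Lemma sc_1 p : sc 1 p = p.
Proof. destruct p; unfold sc; cbn [fst snd]. f_equal; ring. Qed.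
Lemma sc_inv c p : c <> 0 -> sc (/ c) (sc c p) = p.
Proof. intros. rewrite sc_sc, Rinv_l; auto. apply sc_1. Qed.
Lemma sc_origin c : sc c origin = origin.
Proof. unfold sc, origin; cbn [fst snd]. f_equal; ring. Qed.

Lemma sector_char alpha z : 0 < alpha < PI ->
  (sector alpha z <-> 0 < snd z /\ 0 < fst z * sin alpha - snd z * cos alpha).
Proof.
  intros Ha. split.
  - intros [rho [t [Hr [Ht ->]]]]. cbn [fst snd].
    split.
    + apply Rmult_lt_0_compat; auto. apply sin_gt_0; lra.
    + replace (rho * cos t * sin alpha - rho * sin t * cos alpha) with (rho * sin (alpha - t))
        by (rewrite sin_minus; ring).
      apply Rmult_lt_0_compat; auto. apply sin_gt_0; lra.
  - destruct z as [a b]; cbn [fst snd]. intros [Hb Hc].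
    set (rho := sqrt (a ^ 2 + b ^ 2)).
    assert (Hr2 : rho * rho = a ^ 2 + b ^ 2) by (apply sqrt_sqrt; nra).
    assert (Hr : 0 < rho) by (apply sqrt_lt_R0; nra).
    assert (Hu : -1 <= a / rho <= 1).
    { split.
      - apply (Rmult_le_reg_r rho); auto. unfold Rdiv. rewrite Rmult_assoc, Rinv_l by lra. nra.
      - apply (Rmult_le_reg_r rho); auto. unfold Rdiv. rewrite Rmult_assoc, Rinv_l by lra. nra. }
    set (t := acos (a / rho)).
    assert (Hct : cos t = a / rho) by (apply cos_acos; auto).
    assert (Hst : sin t = b / rho).
    { unfold t. rewrite sin_acos by auto.
      replace (1 - (a / rho)²) with ((b / rho)²).
      - apply sqrt_Rsqr. unfold Rdiv. apply Rmult_le_pos; [lra|]. left; apply Rinv_0_lt_compat; auto.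
      - unfold Rsqr. assert (H1 : 1 = (a ^ 2 + b ^ 2) / (rho * rho)) by (rewrite Hr2; field; nra). rewrite H1 at 1. field. lra. }
    assert (Hbr : 0 < b / rho) by (apply Rdiv_lt_0_compat; auto).
    pose proof (acos_bound (a / rho)) as Htb. fold t in Htb.
    exists rho, t. split; auto. split.
    + split.
      * destruct (Req_dec t 0) as [E|E]; [|lra]. rewrite E, sin_0 in Hst. lra.
      * destruct (Rlt_or_le t alpha) as [L|L]; auto. exfalso.
        assert (Hs : 0 <= sin (t - alpha)) by (apply sin_ge_0; lra).
        rewrite sin_minus, Hct, Hst in Hs.
        assert (0 < (a * sin alpha - b * cos alpha) / rho) by (apply Rdiv_lt_0_compat; auto).
        assert ((a * sin alpha - b * cos alpha) / rho = - (b / rho * cos alpha - a / rho * sin alpha)) by (field; lra).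
        lra.
    + f_equal; rewrite ?Hct, ?Hst; field; lra.
Qed.

Lemma sector_sc alpha c z : 0 < alpha < PI -> 0 < c -> (sector alpha (sc c z) <-> sector alpha z).
Proof.
  intros Ha Hc. rewrite !sector_char by auto. unfold sc; cbn [fst snd].
  split; intros [H1 H2]; split; nra.
Qed.

Lemma sector_open alpha : 0 < alpha < PI -> is_open (sector alpha).
Proof.
  intros Ha z Hz. rewrite sector_char in Hz by auto. destruct Hz as [H1 H2].
  set (c := fst z * sin alpha - snd z * cos alpha) in *.
  exists (Rmin (snd z) (c / 2)). split.
  - apply Rmin_glb_lt; lra.
  - intros w Hw. rewrite sector_char by auto.
    pose proof (fst_le z w). pose proof (snd_le z w).
    pose proof (Rmin_l (snd z) (c / 2)). pose proof (Rmin_r (snd z) (c / 2)).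
    pose proof (SIN_bound alpha). pose proof (COS_bound alpha).
    revert H H0. unfold Rabs. destruct (Rcase_abs (fst z - fst w)); destruct (Rcase_abs (snd z - snd w)); intros;
    (split; [lra|]); unfold c in *; nra.
Qed.

Lemma origin_not_sector alpha : ~ sector alpha origin.
Proof.
  intros [rho [t [Hr [Ht E]]]]. unfold origin in E. injection E as E1 E2.
  pose proof (sin2_cos2 t). unfold Rsqr in H.
  assert (rho * cos t * (rho * cos t) + rho * sin t * (rho * sin t) = 0) by (rewrite <- E1, <- E2; ring).
  assert (rho * rho = 0) by (replace (rho * rho) with (rho * rho * (sin t * sin t + cos t * cos t)) by (rewrite H; ring); lra).
  nra.
Qed.

Lemma origin_boundary alpha : 0 < alpha < PI -> boundary (sector alpha) origin.
Proof.
  intros Ha eps He. split.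
  - exists (eps / 2 * cos (alpha / 2), eps / 2 * sin (alpha / 2)). split.
    + exists (eps / 2), (alpha / 2). repeat split; lra.
    + unfold pdist, origin; cbn [fst snd].
      replace ((0 - eps / 2 * cos (alpha / 2)) ^ 2 + (0 - eps / 2 * sin (alpha / 2)) ^ 2) with ((eps/2)²)
        by (pose proof (sin2_cos2 (alpha / 2)); unfold Rsqr in *; nra).
      rewrite sqrt_Rsqr; lra.
  - exists origin. split. apply origin_not_sector. rewrite pdist_refl. auto.
Qed.

Lemma boundary_not (U : pt -> Prop) z : is_open U -> boundary U z -> ~ U z.
Proof.
  intros Ho Hb Hz. destruct (Ho z Hz) as [eps [He Hball]].
  destruct (Hb eps He) as [_ [u [Hu Hd]]]. apply Hu, Hball, Hd.
Qed.

Lemma segment_boundary (U : pt -> Prop) x z : is_open U -> U x -> ~ U z ->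
  exists w, boundary U w /\ pdist x w <= pdist x z.
Proof.
  intros Ho Hx Hz.
  set (D := pdist x z).
  assert (HD : 0 < D).
  { destruct (pdist_nonneg x z) as [H|H]; auto. exfalso. symmetry in H. apply pdist_eq0 in H.
    subst. auto. }
  set (T := fun s => 0 <= s <= 1 /\ forall u, 0 <= u <= s -> U (seg x z u)).
  assert (HT0 : T 0).
  { split; [lra|]. intros u Hu. replace u with 0 by lra. rewrite seg0. auto. }
  assert (HTb : bound T). { exists 1. intros s Hs. apply Hs. }
  destruct (completeness T HTb (ex_intro _ 0 HT0)) as [s [Hub Hlub]].
  assert (Hs0 : 0 <= s) by (apply Hub; auto).
  assert (Hs1 : s <= 1) by (apply Hlub; intros s' Hs'; apply Hs').
  assert (Hbelow : forall u, 0 <= u < s -> U (seg x z u)).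
  { intros u Hu. destruct (classic (exists s', T s' /\ u < s')) as [[s' [Ts' Hlt]]|Hn].
    - apply Ts'. lra.
    - exfalso. assert (s <= u).
      { apply Hlub. intros s' Ts'. destruct (Rle_or_lt s' u); auto. exfalso; apply Hn; eauto. }
      lra. }
  assert (Hdist : forall a b, pdist (seg x z a) (seg x z b) = Rabs (a - b) * D) by (intros; apply pdist_seg).
  assert (Hnot : ~ U (seg x z s)).
  { intros Hw. destruct (Ho _ Hw) as [eps [He Hball]].
    destruct (Req_dec s 1) as [E|E].
    - rewrite E, seg1 in Hw. auto.
    - set (s' := Rmin 1 (s + eps / (2 * D))).
      assert (Hq : 0 < eps / (2 * D)) by (apply Rdiv_lt_0_compat; lra).
      assert (Ts' : T s').
      { split.
        - split; [|apply Rmin_l]. apply Rmin_glb; lra.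
        - intros u Hu. destruct (Rlt_or_le u s) as [L|L]; [apply Hbelow; lra|].
          apply Hball. rewrite Hdist.
          assert (u <= s + eps / (2 * D)) by (pose proof (Rmin_r 1 (s + eps / (2 * D))); unfold s' in Hu; lra).
          rewrite Rabs_minus_sym, Rabs_pos_eq by lra.
          assert ((eps / (2 * D)) * D = eps / 2) by (field; lra).
          assert ((u - s) * D <= (eps / (2 * D)) * D) by (apply Rmult_le_compat_r; lra).
          lra. }
      assert (s' <= s) by (apply Hub; auto).
      assert (s < s'). { unfold s'. apply Rmin_glb_lt; lra. }
      lra. }
  assert (Hspos : 0 < s).
  { destruct Hs0 as [H|H]; auto. exfalso. apply Hnot. rewrite <- H, seg0. auto. }
  exists (seg x z s). split.
  - intros eps He. split.
    + set (u0 := Rmax 0 (s - eps / (2 * D))).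
      assert (Hq : 0 < eps / (2 * D)) by (apply Rdiv_lt_0_compat; lra).
      assert (Hu0 : 0 <= u0 < s). { split; [apply Rmax_l|]. apply Rmax_lub_lt; lra. }
      exists (seg x z u0). split; [apply Hbelow; auto|].
      rewrite Hdist. rewrite Rabs_pos_eq by lra.
      assert (s - eps / (2 * D) <= u0) by apply Rmax_r.
      assert ((eps / (2 * D)) * D = eps / 2) by (field; lra).
      assert ((s - u0) * D <= (eps / (2 * D)) * D) by (apply Rmult_le_compat_r; lra).
      lra.
    + exists (seg x z s). split; auto. rewrite pdist_refl. auto.
  - rewrite <- (seg0 x z) at 1. rewrite Hdist. fold D.
    rewrite Rabs_minus_sym, Rabs_pos_eq by lra. nra.
Qed.

Definition bset (U : pt -> Prop) (x : pt) := fun d => exists z, boundary U z /\ d = pdist x z.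

Lemma dG_pos (U : pt -> Prop) x : is_open U -> U x -> (exists z, boundary U z) -> 0 < dG U x.
Proof.
  intros Ho Hx [z0 Hz0]. destruct (Ho x Hx) as [eps [He Hball]].
  unfold dG. destruct (Rinf_glb (bset U x)) as [_ Hl].
  - exists (pdist x z0); exists z0; auto.
  - exists 0. intros d [z [_ ->]]. apply pdist_nonneg.
  - assert (eps <= Rinf (bset U x)); [|unfold bset in *; lra]. apply Hl.
    intros d [z [Hz ->]]. destruct (Rle_or_lt eps (pdist x z)); auto.
    exfalso. apply (boundary_not U z Ho Hz). auto.
Qed.

Lemma dG_nonneg (U : pt -> Prop) x : 0 <= dG U x.
Proof. unfold dG. apply Rinf_nonneg. intros d [z [_ ->]]. apply pdist_nonneg. Qed.

Lemma dG_le (U V : pt -> Prop) x : is_open U -> is_open V -> (forall z, U z -> V z) -> U x ->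
  (exists z, boundary V z) -> dG U x <= dG V x.
Proof.
  intros HoU HoV Hsub Hx [z0 Hz0]. unfold dG. apply Rinf_le.
  - intros d [z [_ ->]]. apply pdist_nonneg.
  - exists (pdist x z0), z0; auto.
  - intros v [z [Hz ->]].
    assert (~ U z) by (intros H; apply (boundary_not V z HoV Hz); auto).
    destruct (segment_boundary U x z HoU Hx H) as [w [Hw Hle]].
    exists (pdist x w). split; auto. exists w; auto.
Qed.

Lemma boundary_sc1 (U : pt -> Prop) c z :
  (forall c p, 0 < c -> (U (sc c p) <-> U p)) -> 0 < c -> boundary U z -> boundary U (sc c z).
Proof.
  intros Hinv Hc Hb eps He.
  assert (He' : 0 < eps / c) by (apply Rdiv_lt_0_compat; auto).
  destruct (Hb _ He') as [[u1 [Hu1 Hd1]] [u2 [Hu2 Hd2]]].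
  assert (Hm : forall u, pdist z u < eps / c -> pdist (sc c z) (sc c u) < eps).
  { intros u Hu. rewrite pdist_sc by lra.
    assert (c * (eps / c) = eps) by (field; lra).
    assert (c * pdist z u < c * (eps / c)) by (apply Rmult_lt_compat_l; auto). lra. }
  split.
  - exists (sc c u1). split; [apply Hinv; auto|]. auto.
  - exists (sc c u2). split; [rewrite Hinv; auto|]. auto.
Qed.

Lemma boundary_sc (U : pt -> Prop) c z :
  (forall c p, 0 < c -> (U (sc c p) <-> U p)) -> 0 < c -> (boundary U (sc c z) <-> boundary U z).
Proof.
  intros Hinv Hc. split.
  - intros Hb. rewrite <- (sc_inv c z) by lra. apply boundary_sc1; auto.
    apply Rinv_0_lt_compat; auto.
  - apply boundary_sc1; auto.
Qed.

Lemma dS_sc alpha c x : 0 < alpha < PI -> 0 < c ->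
  dG (sector alpha) (sc c x) = c * dG (sector alpha) x.
Proof.
  intros Ha Hc. unfold dG.
  assert (Hinv : forall c p, 0 < c -> (sector alpha (sc c p) <-> sector alpha p))
    by (intros; apply sector_sc; auto).
  rewrite <- Rinf_scale; auto.
  - f_equal. apply functional_extensionality. intros d. apply propositional_extensionality. split.
    + intros [z [Hz ->]]. exists (pdist x (sc (/ c) z)). split.
      * exists (sc (/ c) z). split; auto. apply boundary_sc1; auto. apply Rinv_0_lt_compat; auto.
      * rewrite <- pdist_sc by lra. rewrite sc_sc, Rinv_r, sc_1; lra.
    + intros [u [[z [Hz ->]] ->]]. exists (sc c z). split.
      * apply boundary_sc; auto.
      * rewrite pdist_sc; lra.
  - intros d [z [_ ->]]. apply pdist_nonneg.
Qed.

Lemma boundary_ex_sub (G S : pt -> Prop) x z : is_open G -> is_open S -> (forall p, G p -> S p) ->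
  G x -> boundary S z -> exists w, boundary G w.
Proof.
  intros HoG HoS Hsub Hx Hz.
  assert (~ G z) by (intros H; apply (boundary_not S z HoS Hz); auto).
  destruct (segment_boundary G x z HoG Hx H) as [w [Hw _]]. eauto.
Qed.

Lemma dG_near (alpha r : R) (G : pt -> Prop) x : 0 < alpha < PI -> is_open G ->
  (forall z, G z -> sector alpha z) ->
  (forall z, pdist z origin < r -> (G z <-> sector alpha z)) ->
  G x -> pdist x origin < r / 2 ->
  dG G x = dG (sector alpha) x.
Proof.
  intros Ha HoG Hsub Hr Hx Hxr.
  assert (HoS := sector_open alpha Ha).
  assert (HbS := origin_boundary alpha Ha).
  apply Rle_antisym.
  - apply dG_le; eauto.
  - unfold dG. apply Rinf_le.
    + intros d [z [_ ->]]. apply pdist_nonneg.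
    + destruct (boundary_ex_sub G (sector alpha) x origin) as [w Hw]; auto.
      exists (pdist x w), w; auto.
    + intros v [w [Hw ->]].
      destruct (Rle_or_lt (pdist x origin) (pdist x w)) as [L|L].
      * exists (pdist x origin). split; auto. exists origin; auto.
      * assert (Hwr : pdist w origin < r).
        { pose proof (pdist_tri w origin x). rewrite (pdist_sym w x) in H.
          pose proof (pdist_nonneg x origin). lra. }
        assert (~ sector alpha w).
        { rewrite <- (Hr w Hwr). apply (boundary_not G w HoG Hw). }
        destruct (segment_boundary (sector alpha) x w HoS (Hsub x Hx) H) as [z [Hz Hle]].
        exists (pdist x z). split; auto. exists z; auto.
Qed.

Lemma partition_mono P n : partition P n -> forall i k, (i + k <= n)%nat -> P i <= P (i + k)%nat.
Proof.
  intros [_ [_ Hm]] i k. induction k as [|k IH]; intros Hk.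
  - rewrite Nat.add_0_r. lra.
  - replace (i + S k)%nat with (S (i + k)) by lia.
    assert (P (i + k)%nat <= P (S (i + k))) by (apply Hm; lia).
    specialize (IH ltac:(lia)). lra.
Qed.

Lemma partition_in P n : partition P n -> forall i, (i <= n)%nat -> 0 <= P i <= 1.
Proof.
  intros Hp i Hi. pose proof (partition_mono P n Hp) as Hm. destruct Hp as [H0 [H1 _]].
  split.
  - pose proof (Hm 0%nat i ltac:(lia)) as H. simpl in H. lra.
  - pose proof (Hm i (n - i)%nat ltac:(lia)) as H. replace (i + (n - i))%nat with n in H by lia. lra.
Qed.

Lemma rsum_ext f g n : (forall i, (i < n)%nat -> f i = g i) -> rsum f n = rsum g n.
Proof.
  induction n as [|n IH]; intros H; simpl; auto.
  rewrite IH by (intros; apply H; lia). rewrite H by lia. reflexivity.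
Qed.

Lemma rsum_le f g n : (forall i, (i < n)%nat -> f i <= g i) -> rsum f n <= rsum g n.
Proof.
  induction n as [|n IH]; intros H; simpl; [lra|].
  assert (rsum f n <= rsum g n) by (apply IH; intros; apply H; lia).
  assert (f n <= g n) by (apply H; lia). lra.
Qed.

Lemma rsum_scale f c n : rsum (fun i => c * f i) n = c * rsum f n.
Proof. induction n as [|n IH]; simpl; [ring|]. rewrite IH. ring. Qed.

Lemma rsum_nonneg f n : (forall i, (i < n)%nat -> 0 <= f i) -> 0 <= rsum f n.
Proof.
  intros H. replace 0 with (rsum (fun _ => 0) n).
  - apply rsum_le. auto.
  - clear H. induction n; simpl; auto. rewrite IHn. ring.
Qed.

Lemma lower_sum_nonneg f gamma P n : (forall z, 0 <= f z) -> 0 <= lower_sum f gamma P n.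
Proof.
  intros H. unfold lower_sum. apply rsum_nonneg. intros i _.
  apply Rmult_le_pos; [|apply pdist_nonneg]. apply Rinf_nonneg.
  intros v [t [_ ->]]. auto.
Qed.

Lemma inv_nonneg x : 0 <= x -> 0 <= / x.
Proof.
  intros [H|H]. left; apply Rinv_0_lt_compat; auto. subst. rewrite Rinv_0. lra.
Qed.

Definition triv_P (i : nat) : R := match i with O => 0 | _ => 1 end.

Lemma triv_partition : partition triv_P 1.
Proof. split; [reflexivity|]. split; [reflexivity|]. intros i Hi. destruct i; simpl; [lra|lia]. Qed.

Lemma line_integral_nonneg f gamma v : (forall z, 0 <= f z) -> line_integral f gamma = Some v -> 0 <= v.
Proof.
  intros H Hv. apply sup_opt_inv in Hv. destruct Hv as [[Hu _] _].
  apply Rle_trans with (lower_sum f gamma triv_P 1).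
  - apply lower_sum_nonneg; auto.
  - apply Hu. exists triv_P, 1%nat. split; auto. apply triv_partition.
Qed.

Lemma lower_sum_mono f g gamma P n : partition P n ->
  (forall t, 0 <= t <= 1 -> 0 <= g (gamma t) <= f (gamma t)) ->
  lower_sum g gamma P n <= lower_sum f gamma P n.
Proof.
  intros Hp H. unfold lower_sum. apply rsum_le. intros i Hi.
  pose proof (partition_in P n Hp i ltac:(lia)).
  pose proof (partition_in P n Hp (S i) ltac:(lia)).
  assert (P i <= P (S i)) by (destruct Hp as [_ [_ Hm]]; auto).
  apply Rmult_le_compat_r; [apply pdist_nonneg|].
  apply Rinf_le.
  - intros v [t [Ht ->]]. apply H. lra.
  - exists (f (gamma (P i))), (P i). split; auto. lra.
  - intros v [t [Ht ->]]. exists (g (gamma t)). split; [exists t; auto|]. apply H. lra.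
Qed.

Lemma line_integral_mono f g gamma v :
  (forall t, 0 <= t <= 1 -> 0 <= g (gamma t) <= f (gamma t)) ->
  line_integral f gamma = Some v -> exists w, line_integral g gamma = Some w /\ w <= v.
Proof.
  intros H Hv. unfold line_integral in *. eapply sup_opt_le; [| |exact Hv].
  - exists (lower_sum g gamma triv_P 1), triv_P, 1%nat. split; auto. apply triv_partition.
  - intros u [P [n [Hp ->]]]. exists (lower_sum f gamma P n). split.
    + exists P, n. auto.
    + apply lower_sum_mono; auto.
Qed.

Lemma lower_sum_sc alpha c gamma P n : 0 < alpha < PI -> 0 < c ->
  lower_sum (fun z => / dG (sector alpha) z) (fun t => sc c (gamma t)) P n =
  lower_sum (fun z => / dG (sector alpha) z) gamma P n.
Proof.
  intros Ha Hc. unfold lower_sum. apply rsum_ext. intros i _.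
  rewrite pdist_sc by lra.
  assert (Hs : (fun v => exists t, P i <= t <= P (S i) /\ v = / dG (sector alpha) (sc c (gamma t))) =
     (fun v => exists u, (exists t, P i <= t <= P (S i) /\ u = / dG (sector alpha) (gamma t)) /\ v = / c * u)).
  { apply functional_extensionality. intros v. apply propositional_extensionality. split.
    - intros [t [Ht ->]]. exists (/ dG (sector alpha) (gamma t)). split; [exists t; auto|].
      rewrite dS_sc by auto. apply Rinv_mult.
    - intros [u [[t [Ht ->]] ->]]. exists t. split; auto. rewrite dS_sc by auto.
      rewrite Rinv_mult. reflexivity. }
  rewrite Hs. rewrite Rinf_scale.
  - field. lra.
  - apply Rinv_0_lt_compat; auto.
  - intros u [t [_ ->]]. apply inv_nonneg, dG_nonneg.
Qed.

Lemma line_integral_sc alpha c gamma : 0 < alpha < PI -> 0 < c ->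
  line_integral (fun z => / dG (sector alpha) z) (fun t => sc c (gamma t)) =
  line_integral (fun z => / dG (sector alpha) z) gamma.
Proof.
  intros Ha Hc. unfold line_integral. f_equal.
  apply functional_extensionality. intros v. apply propositional_extensionality.
  split; intros [P [n [Hp ->]]]; exists P, n; split; auto; rewrite lower_sum_sc; auto.
Qed.

Lemma k_cmp alpha (G : pt -> Prop) lam x y c : 0 < alpha < PI -> is_open G ->
  (forall z, G z -> sector alpha z) -> 0 < lam ->
  k_G G (sc lam x) (sc lam y) = Some c ->
  exists c', k_G (sector alpha) x y = Some c' /\ c' <= c.
Proof.
  intros Ha HoG Hsub Hl Hk. unfold k_G in *.
  assert (HoS := sector_open alpha Ha).
  assert (HbS := origin_boundary alpha Ha).
  refine (inf_opt_le _ _ 0 c _ _ Hk).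
  - intros v [g [_ [_ Hli]]]. eapply line_integral_nonneg; [|exact Hli].
    intros z. apply inv_nonneg, dG_nonneg.
  - intros v [g [[Hg0 [Hg1 [HgG Hgc]]] [[M HM] Hli]]].
    set (mu := / lam). assert (Hmu : 0 < mu) by (apply Rinv_0_lt_compat; auto).
    destruct (line_integral_mono (fun z => / dG G z) (fun z => / dG (sector alpha) z) g v)
      as [w [Hw Hle]]; auto.
    { intros t Ht. specialize (HgG t Ht). split.
      - apply inv_nonneg, dG_nonneg.
      - assert (0 < dG G (g t)).
        { apply dG_pos; auto. eapply boundary_ex_sub; eauto. }
        assert (dG G (g t) <= dG (sector alpha) (g t)) by (apply dG_le; eauto).
        apply Rinv_le_contravar; auto. }
    exists w. split; auto. exists (fun t => sc mu (g t)). split; [|split].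
    + split; [|split; [|split]].
      * rewrite Hg0. apply sc_inv. lra.
      * rewrite Hg1. apply sc_inv. lra.
      * intros t Ht. apply sector_sc; auto.
      * intros t Ht eps He.
        destruct (Hgc t Ht (eps * lam)) as [delta [Hd Hs]]; [nra|].
        exists delta. split; auto. intros s Hs1 Hs2. rewrite pdist_sc by lra.
        specialize (Hs s Hs1 Hs2).
        assert (mu * (eps * lam) = eps) by (unfold mu; field; lra).
        assert (mu * pdist (g s) (g t) < mu * (eps * lam)) by (apply Rmult_lt_compat_l; auto). lra.
    + exists (mu * M). intros P n Hp. unfold chord_sum.
      rewrite (rsum_ext _ (fun i => mu * pdist (g (P i)) (g (P (S i))))).
      * rewrite rsum_scale. apply Rmult_le_compat_l; [lra|]. apply HM; auto.
      * intros i _. apply pdist_sc. lra.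
    + rewrite line_integral_sc; auto.
Qed.

Lemma Rmin_scale c a b : 0 < c -> Rmin (c * a) (c * b) = c * Rmin a b.
Proof.
  intros Hc. unfold Rmin. destruct (Rle_dec (c * a) (c * b)); destruct (Rle_dec a b); nra.
Qed.

Lemma jS_sc alpha lam x y : 0 < alpha < PI -> 0 < lam -> sector alpha x -> sector alpha y ->
  j_G (sector alpha) (sc lam x) (sc lam y) = j_G (sector alpha) x y.
Proof.
  intros Ha Hl Hx Hy. unfold j_G. rewrite !dS_sc by auto. rewrite Rmin_scale by auto.
  rewrite pdist_sc by lra.
  assert (HoS := sector_open alpha Ha).
  assert (HbS := origin_boundary alpha Ha).
  assert (0 < dG (sector alpha) x) by (apply dG_pos; eauto).
  assert (0 < dG (sector alpha) y) by (apply dG_pos; eauto).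
  assert (0 < Rmin (dG (sector alpha) x) (dG (sector alpha) y)) by (apply Rmin_glb_lt; auto).
  f_equal. field. lra.
Qed.

Theorem theorem5p2 (alpha : R) (G : pt -> Prop) (r : R) :
  0 < alpha < PI ->
  domain G ->
  (forall z, G z -> sector alpha z) ->
  0 < r ->
  (forall z, pdist z origin < r -> (G z <-> sector alpha z)) ->
  er_le (A_G (sector alpha)) (A_G G).
Proof.
  intros Ha [_ [HoG _]] Hsub Hr Hloc.
  destruct (A_G G) as [a|] eqn:HA; [|destruct (A_G (sector alpha)); exact I].
  unfold A_G in HA |- *.
  destruct (inf_opt_le (fun A => 1 <= A /\ forall x y, sector alpha x -> sector alpha y ->
       er_le (k_G (sector alpha) x y) (Some (A * j_G (sector alpha) x y)))
     (fun A => 1 <= A /\ forall x y, G x -> G y -> er_le (k_G G x y) (Some (A * j_G G x y))) 1 a) as [c' [Hc' Hle]];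
    [ | |exact HA|rewrite Hc'; exact Hle].
  - intros A [H _]; auto.
  - intros A [H1 HAG]. exists A. split; [|lra]. split; auto.
    intros x y Hx Hy.
    set (lam := r / (4 * (1 + pdist x origin + pdist y origin))).
    pose proof (pdist_nonneg x origin). pose proof (pdist_nonneg y origin).
    assert (Hl : 0 < lam) by (unfold lam; apply Rdiv_lt_0_compat; lra).
    assert (Hsm : forall z, pdist z origin <= pdist x origin + pdist y origin ->
               pdist (sc lam z) origin < r / 2).
    { intros z Hz. rewrite <- (sc_origin lam), pdist_sc by lra.
      assert (lam * (4 * (1 + pdist x origin + pdist y origin)) = r) by (unfold lam; field; lra).
      pose proof (pdist_nonneg z origin). nra. }
    assert (Hx' := Hsm x ltac:(lra)). assert (Hy' := Hsm y ltac:(lra)).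
    assert (Gx : G (sc lam x)) by (apply Hloc; [lra|]; apply sector_sc; auto).
    assert (Gy : G (sc lam y)) by (apply Hloc; [lra|]; apply sector_sc; auto).
    specialize (HAG _ _ Gx Gy).
    destruct (k_G G (sc lam x) (sc lam y)) as [c|] eqn:Hk; [|contradiction].
    destruct (k_cmp alpha G lam x y c Ha HoG Hsub Hl Hk) as [c2 [Hk2 Hc2]].
    rewrite Hk2. simpl in HAG |- *.
    unfold j_G in HAG. rewrite !(dG_near alpha r G) in HAG by auto. fold (j_G (sector alpha) (sc lam x) (sc lam y)) in HAG.
    rewrite jS_sc in HAG by auto. lra.
Qed.
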